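(* Let $P(y,dz)=\mathbb P(y+\zeta\in dz)$ be the transition kernel of a random walk $\{S_n\}$ on $\mathbb R$ with i.i.d. increments distributed as $\zeta$, let $s\in\mathbb R$, $\tau=\inf\{n\ge0:S_n>s\}$, let $v:\mathbb R\to(0,\infty)$ be measurable and $w(y)=\int v(z)P(y,dz)$, and let $\epsilon>0$. For a starting point $S_0=y\le s$ define $L=\mathbb 1_{\{\tau<\infty\}}\prod_{k=1}^\tau w(S_{k-1})/v(S_k)$. Assume $w(y)\in(0,\infty)$ for $y\le s$, and that there exist $\delta_1>0$ and a function $h:\mathbb R\to[\delta_1,\infty)$ with $$w(y)^{1+\epsilon}\int v(z)h(z)P(y,dz)\le h(y)v(y)^{2+\epsilon}\quad\text{for all }y\le s.$$ If moreover $h(z)\ge1$ and $v(z)\ge\delta_2$ for all $z>s$, for some $\delta_2>0$, then for every $y\le s$, $$\mathbb E_y[L^{1+\epsilon}]\le\delta_1^{-1}\delta_2^{-(2+\epsilon)}v(y)^{2+\epsilon}h(y),$$ where $\mathbb E_y$ denotes expectation under the original law of the random walk started at $y$. *)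

(* Defs.v *)
From HB Require Import structures.
From mathcomp Require Import all_boot all_order all_algebra.
From mathcomp Require Import all_classical all_reals all_analysis.
Set Implicit Arguments. Unset Strict Implicit. Unset Printing Implicit Defensive.
Import Order.TTheory GRing.Theory Num.Theory.
Local Open Scope classical_set_scope.
Local Open Scope ring_scope.

Section rw.
Context {R : realType} {d : measure_display} {Omega : measurableType d}.

Definition mutually_independent (Pr : probability Omega R)
  (X : nat -> Omega -> R) : Prop :=
  forall (I : seq nat) (B : nat -> set R), uniq I ->
    (forall i, measurable (B i)) ->
    Pr (\big[setI/setT]_(i <- I) (X i @^-1` B i)) =
    (\prod_(i <- I) Pr (X i @^-1` B i))%E.

Definition identically_distributed (Pr : probability Omega R)
  (X : nat -> Omega -> R) : Prop :=
  forall (k : nat) (B : set R), measurable B ->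
    Pr (X k @^-1` B) = Pr (X 0 @^-1` B).

Definition walk_kernel (Pr : probability Omega R) (zeta : Omega -> R) (y : R) :
  set R -> \bar R := pushforward Pr (fun om => y + zeta om).

Definition walk_w (Pr : probability Omega R) (zeta : Omega -> R) (v : R -> R)
  (y : R) : \bar R := (\int[walk_kernel Pr zeta y]_z (v z)%:E)%E.

Definition walk (X : nat -> Omega -> R) (y : R) (om : Omega) (n : nat) : R :=
  y + \sum_(k < n) X k om.

(* On {tau < oo}, tau is the least n with
   S_n > s (ex_minn); for k <= tau we have S_{k-1} <= s, where w is finite,
   so taking [fine] of w there is harmless. *)
Definition Lwalk (Pr : probability Omega R) (X : nat -> Omega -> R)
  (v : R -> R) (s y : R) (om : Omega) : R :=
  match pselect (exists n, s < walk X y om n) with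
  | left H =>
      \prod_(k < ex_minn H)
        (fine (walk_w Pr (X 0) v (walk X y om k)) / v (walk X y om k.+1))
  | right _ => 0
  end.

End rw.

(* Main.v *)
Require Import Defs.
From HB Require Import structures.
From mathcomp Require Import all_boot all_order all_algebra.
From mathcomp Require Import all_classical all_reals all_analysis.
From mathcomp Require Import measurable_realfun.
From mathcomp Require Import ring lra.
Import Order.TTheory GRing.Theory Num.Theory.
Set Implicit Arguments. Unset Strict Implicit. Unset Printing Implicit Defensive.
Local Open Scope classical_set_scope.
Local Open Scope ring_scope.

Definition pfm (R : realType) d1 d2 (T1 : measurableType d1) (T2 : measurableType d2)
  (m : {measure set T1 -> \bar R}) (f : T1 -> T2) (mf : measurable_fun setT f)
  : {measure set T2 -> \bar R} :=
  measure_function_pushforward__canonical__measure_function_Measure m mf.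

Definition mkmf d1 d2 (T1 : measurableType d1) (T2 : measurableType d2)
  (f : T1 -> T2) (mf : measurable_fun setT f) : {mfun T1 >-> T2} :=
  HB.pack f (isMeasurableFun.Build _ _ _ _ f mf).

Lemma mkmfE d1 d2 (T1 : measurableType d1) (T2 : measurableType d2)
  (f : T1 -> T2) (mf : measurable_fun setT f) : (mkmf mf : T1 -> T2) = f.
Proof. by []. Qed.

Lemma rect_unique (R : realType) d1 d2 (T1 : measurableType d1) (T2 : measurableType d2)
  (m1 m2 : {measure set (T1 * T2) -> \bar R}) :
  (m1 setT < +oo)%E ->
  (forall A B, measurable A -> measurable B -> m1 (A `*` B) = m2 (A `*` B)) ->
  forall G, measurable G -> m1 G = m2 G.
Proof.
move=> m1oo m12 G mG.
pose C : set (set (T1 * T2)) :=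
  [set C | exists A, measurable A /\ exists B, measurable B /\ C = A `*` B].
have CI : setI_closed C.
  move=> /= _ _ [X1 [mX1 [X2 [mX2 ->]]]] [Y1 [mY1 [Y2 [mY2 ->]]]].
  rewrite -setXI; exists (X1 `&` Y1); split; first exact: measurableI.
  by exists (X2 `&` Y2); split => //; exact: measurableI.
apply: (measure_unique C (fun _ => setT)) => //.
- rewrite measurable_prod_measurableType //; congr (<<s _ >>).
  rewrite predeqE; split => [[A mA [B mB <-]]|[A [mA [B [mB ->]]]]].
    by exists A; split => //; exists B.
  by exists A => //; exists B.
- by move=> _; exists setT; split => //; exists setT; split => //; rewrite setXTT.
- by rewrite bigcup_const.
- by move=> A [A1 [mA1 [A2 [mA2 ->]]]]; exact: m12.
Qed.

Section indep.
Context (R : realType) d (Omega : measurableType d) (Pr : probability Omega R)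
  (X : nat -> Omega -> R) (mX : forall k, measurable_fun setT (X k))
  (indX : mutually_independent Pr X) (idX : identically_distributed Pr X).

Definition cyl (I : seq nat) (B : nat -> set R) : set Omega :=
  \big[setI/setT]_(i <- I) X i @^-1` B i.

Lemma mpre k (A : set R) : measurable A -> measurable (X k @^-1` A).
Proof. by move=> mA; rewrite -[X in measurable X]setTI; exact: mX. Qed.

Lemma mcyl I B : (forall i, measurable (B i)) -> measurable (cyl I B).
Proof.
move=> mB; rewrite /cyl; elim: I => [|i I IH]; rewrite ?big_nil ?big_cons //.
by apply: measurableI => //; exact: mpre.
Qed.

Lemma cyl_cons k I B Bk : k \notin I ->
  cyl (k :: I) (fun i => if i == k then Bk else B i) = X k @^-1` Bk `&` cyl I B.
Proof.
move=> kI; rewrite /cyl big_cons eqxx; congr (_ `&` _).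
rewrite big_seq_cond [RHS]big_seq_cond; apply: eq_bigr => i /andP[iI _].
by case: eqP => // ik; move: kI; rewrite -ik iI.
Qed.

Lemma indep_cons k I B Bk : uniq I -> k \notin I -> measurable Bk ->
  (forall i, measurable (B i)) ->
  Pr (X k @^-1` Bk `&` cyl I B) = (Pr (X k @^-1` Bk) * Pr (cyl I B))%E.
Proof.
move=> uI kI mBk mB.
pose B' i := if i == k then Bk else B i.
have mB' : forall i, measurable (B' i) by move=> i; rewrite /B'; case: eqP.
have := indX (I := k :: I) (B := B') _ mB'; rewrite /= kI uI => /(_ isT).
rewrite -/(cyl (k :: I) B') /B' cyl_cons // => ->.
rewrite big_cons eqxx /cyl (indX uI mB); congr (_ * _)%E.
rewrite big_seq_cond [RHS]big_seq_cond; apply: eq_bigr => i /andP[iI _].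
by case: eqP => // ik; move: kI; rewrite -ik iI.
Qed.


Section state.
Context dT (T : measurableType dT) (F : T * R -> T)
  (mF : measurable_fun setT F) (y0 : T).

Fixpoint Y (n : nat) (om : Omega) : T :=
  match n with 0 => y0 | n.+1 => F (Y n om, X n om) end.
Definition Phi n om := (Y n om, X n om).

Lemma mY n : measurable_fun setT (Y n).
Proof.
elim: n => [|n IH] /=; first exact: measurable_cst.
by apply: measurableT_comp => //; exact: measurable_fun_pair.
Qed.

Lemma mPhi n : measurable_fun setT (Phi n).
Proof. exact: measurable_fun_pair (mY n) (mX n). Qed.

Lemma fin_Pr (A : set Omega) : measurable A -> Pr A = (fine (Pr A))%:E.
Proof.
move=> mA; rewrite fineK // ge0_fin_numE //.
by rewrite (le_lt_trans (probability_le1 _ mA)) // ltry.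
Qed.

Lemma indepC n G I B : measurable G -> uniq I -> all (fun i => n < i)%N I ->
  (forall i, measurable (B i)) ->
  Pr (Phi n @^-1` G `&` cyl I B) = (Pr (Phi n @^-1` G) * Pr (cyl I B))%E.
Proof.
elim: n G I B => [|n IH] G I B mG uI aI mB.
  have -> : Phi 0 @^-1` G = X 0 @^-1` xsection G y0.
    by apply/seteqP; split => om /=; rewrite /xsection /= inE.
  apply: indep_cons => //; last exact: measurable_xsection.
  by apply/negP => /(allP aI).
have mI : forall i, measurable (B i) by [].
have c0 : (0 <= fine (Pr (cyl I B)))%R by apply: fine_ge0.
pose lam1 := pfm (mrestr Pr (mcyl I mB)) (mPhi n.+1).
pose lam2 := mscale (NngNum c0) (pfm Pr (mPhi n.+1)).
suff : lam1 G = lam2 G.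
  rewrite /lam1 /lam2 /= /mscale /= /mrestr /pushforward -(fin_Pr (mcyl I mB)) => ->.
  by rewrite muleC.
apply: (@rect_unique R _ _ T _ lam1 lam2) => //.
- rewrite /lam1 /= /mrestr /pushforward (le_lt_trans (probability_le1 _ _)) ?ltry //.
  by apply: measurableI; [rewrite -[X in measurable X]setTI; exact: mPhi|exact: mcyl].
- move=> A B' mA mB'.
  rewrite /lam1 /lam2 /= /mscale /= /mrestr /pushforward.
  have nI : n.+1 \notin I by apply/negP => /(allP aI); rewrite ltnn.
  have E1 : Phi n.+1 @^-1` (A `*` B') = Phi n @^-1` (F @^-1` A) `&` X n.+1 @^-1` B'.
    by [].
  have mFA : measurable (F @^-1` A) by rewrite -[X in measurable X]setTI; exact: mF.
  have aI' : all (fun i => n < i)%N (n.+1 :: I).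
    by rewrite /= ltnSn /=; apply/allP => i /(allP aI) /ltnW.
  have uI' : uniq (n.+1 :: I) by rewrite /= nI.
  pose B'' i := if i == n.+1 then B' else B i.
  have mB'' : forall i, measurable (B'' i) by move=> i; rewrite /B''; case: eqP.
  rewrite E1 -setIA -cyl_cons // IH // cyl_cons // indep_cons //.
  have := IH (F @^-1` A) [:: n.+1] B'' mFA isT _ mB''.
  rewrite /= ltnSn => /(_ isT).
  rewrite cyl_cons // /cyl big_nil setIT => ->.
  by rewrite -(fin_Pr (mcyl I mB)) muleA [RHS]muleC.
Qed.

Lemma indep_Phi n A B : measurable A -> measurable B ->
  Pr (Phi n @^-1` (A `*` B)) = (Pr (Y n @^-1` A) * Pr (X 0 @^-1` B))%E.
Proof.
move=> mA mB; case: n => [|n].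
  case: (pselect (A y0)) => Ay.
    have -> : Phi 0 @^-1` (A `*` B) = X 0 @^-1` B.
      by apply/seteqP; split => om /=; [case|split].
    have -> : Y 0 @^-1` A = setT by apply/seteqP; split => om.
    by rewrite probability_setT mul1e.
  have -> : Phi 0 @^-1` (A `*` B) = set0.
    by apply/seteqP; split => om //= [].
  have -> : Y 0 @^-1` A = set0 by apply/seteqP; split => om.
  by rewrite measure0 mul0e.
have mFA : measurable (F @^-1` A) by rewrite -[X in measurable X]setTI; exact: mF.
have E1 : Phi n.+1 @^-1` (A `*` B) = Phi n @^-1` (F @^-1` A) `&` X n.+1 @^-1` B.
  by [].
have -> : Y n.+1 @^-1` A = Phi n @^-1` (F @^-1` A) by [].
have := indepC (n := n) (I := [:: n.+1]) (B := fun _ => B) mFA isT.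
rewrite /= ltnSn => /(_ isT (fun _ => mB)).
rewrite /cyl big_cons big_nil setIT -E1 => ->.
by rewrite idX.
Qed.

Lemma law_Phi n G : measurable G ->
  Pr (Phi n @^-1` G) =
  (distribution Pr (mkmf (mY n)) \x distribution Pr (mkmf (mX 0)))%E G.
Proof.
move=> mG; symmetry.
apply: (product_measure_unique (m' := pfm Pr (mPhi n))) => // A B mA mB.
by rewrite /= /pushforward indep_Phi.
Qed.

Lemma int_Phi (n : nat) (g : (T * R)%type -> \bar R) : measurable_fun setT g ->
  (forall z, (0 <= g z)%E) ->
  (\int[Pr]_om g (Phi n om) =
  \int[distribution Pr (mkmf (mY n)) \x distribution Pr (mkmf (mX 0))]_z g z)%E.
Proof.
move=> mg g0.
transitivity (\int[pfm Pr (mPhi n)]_z g z)%E.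
  rewrite /pfm (ge0_integral_pushforward (mPhi n)) //.
apply: eq_measure_integral => A mA _; exact: law_Phi.
Qed.

End state.

End indep.

Section main.
Context (R : realType) (d : measure_display)
  (Omega : measurableType d) (Pr : probability Omega R)
  (X : nat -> Omega -> R)
  (mX : forall k, measurable_fun [set: Omega] (X k))
  (indX : mutually_independent Pr X)
  (idX : identically_distributed Pr X)
  (s : R) (v : R -> R) (mv : measurable_fun [set: R] v)
  (vpos : forall z, 0 < v z)
  (eps : R) (eps_pos : 0 < eps).

Let mu0 := distribution Pr (mkmf (mX 0)).
Local Notation p := (1 + eps).
Definition wf (u : R) := fine (walk_w Pr (X 0) v u).

Lemma walk_wE u : walk_w Pr (X 0) v u = (\int[mu0]_x (v (u + x))%:E)%E.
Proof.
rewrite /walk_w /walk_kernel /mu0.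
have mux : measurable_fun setT (fun om => u + X 0 om).
  by apply: measurable_funD => //; exact: measurable_cst.
rewrite (ge0_integral_pushforward mux) //; last first.
  by move=> z _; rewrite lee_fin ltW.
  exact/measurable_EFinP.
rewrite ge0_integral_distribution //.
  by apply/measurable_EFinP; apply: measurableT_comp => //; apply: measurable_funD => //; exact: measurable_cst.
by move=> z; rewrite lee_fin ltW.
Qed.

Lemma wf_ge0 u : 0 <= wf u.
Proof. by rewrite /wf fine_ge0 // walk_wE integral_ge0 // => x _; rewrite lee_fin ltW. Qed.

Lemma mwf : measurable_fun setT wf.
Proof.
have -> : wf = fine \o (fubini_F mu0 (fun q : R * R => (v (q.1 + q.2))%:E)).
  by apply/funext => u; rewrite /wf walk_wE.
apply: measurableT_comp; first exact: fine_measurable.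
apply: measurable_fun_fubini_tonelli_F.
  apply/measurable_EFinP; apply: measurableT_comp => //.
  by apply: measurable_funD; [exact: measurable_fst|exact: measurable_snd].
by move=> q; rewrite lee_fin ltW.
Qed.

Definition ratio u x := (wf u / v (u + x)) `^ p.

Lemma powR_div (a b r : R) : 0 <= a -> 0 < b -> (a / b) `^ r = a `^ r * b `^ (- r).
Proof.
move=> a0 b0; rewrite powRM //; last by rewrite invr_ge0 ltW.
congr (_ * _); rewrite powRN.
have bp : 0 < b `^ r by apply: powR_gt0.
have H : b `^ r * (b^-1) `^ r = 1.
  by rewrite -(@powRM _ b) ?invr_ge0 ?ltW // mulfV ?gt_eqF // powR1.
by rewrite -[LHS]mul1r -(mulVf (lt0r_neq0 bp)) -mulrA H mulr1.
Qed.

Lemma ratioE u x : ratio u x = wf u `^ p * v (u + x) `^ (- p).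
Proof. by rewrite /ratio powR_div // wf_ge0. Qed.

Lemma ratio_ge0 u x : 0 <= ratio u x.
Proof. exact: powR_ge0. Qed.

Lemma mratio : measurable_fun setT (fun q : (R * R)%type => ratio q.1 q.2).
Proof.
under eq_fun do rewrite ratioE.
apply: measurable_funM.
  have := measurableT_comp (measurable_powR p) (measurableT_comp mwf (@measurable_fst _ _ R R)).
  exact.
apply: (measurableT_comp (measurable_powR (- p))).
apply: (measurableT_comp mv).
exact: measurable_funD measurable_fst measurable_snd.
Qed.

Definition Fst (z : ((R * R) * R)%type) : (R * R)%type :=
  if z.1.1 <= s then (z.1.1 + z.2, z.1.2 * ratio z.1.1 z.2) else z.1.

Lemma mFst : measurable_fun setT Fst.
Proof.
have m11 : measurable_fun setT (fun z : ((R * R) * R)%type => z.1.1).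
  exact: (measurableT_comp (@measurable_fst _ _ R R) measurable_fst).
have m12 : measurable_fun setT (fun z : ((R * R) * R)%type => z.1.2).
  exact: (measurableT_comp (@measurable_snd _ _ R R) measurable_fst).
have m2 : measurable_fun setT (fun z : ((R * R) * R)%type => z.2).
  exact: measurable_snd.
rewrite /Fst; apply: measurable_fun_ifT.
- by apply: measurable_fun_ler => //; exact: measurable_cst.
- apply/measurable_fun_pairP; split.
    exact: measurable_funD.
  apply: measurable_funM => //.
  have := measurableT_comp mratio (measurable_fun_pair m11 m2).
  exact.
- exact: measurable_fst.
Qed.

Context
  (wfin : forall y, y <= s ->
     (0 < walk_w Pr (X 0%N) v y)%E /\ (walk_w Pr (X 0%N) v y < +oo)%E)
  (delta1 : R) (delta1_pos : 0 < delta1)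
  (h : R -> R) (mh : measurable_fun [set: R] h)
  (h_ge : forall z, delta1 <= h z)
  (hyp : forall y, y <= s ->
     ((fine (walk_w Pr (X 0%N) v y) `^ (1 + eps))%R%:E *
       \int[walk_kernel Pr (X 0%N) y]_z (v z * h z)%:E
       <= (h y * v y `^ (2 + eps))%R%:E)%E)
  (delta2 : R) (delta2_pos : 0 < delta2)
  (v_ge : forall z, s < z -> delta2 <= v z).

Lemma h_gt0 z : 0 < h z.
Proof. exact: lt_le_trans delta1_pos (h_ge z). Qed.

Definition fv u := v u `^ (2 + eps) * h u.

Lemma fv_ge0 u : 0 <= fv u.
Proof. by rewrite /fv mulr_ge0 ?powR_ge0 // ltW // h_gt0. Qed.

Lemma mfv : measurable_fun setT fv.
Proof.
apply: measurable_funM => //.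
exact: (measurableT_comp (measurable_powR _) mv).
Qed.

Definition mq (q : (R * R)%type) := `|q.2| * fv q.1.

Lemma mq_ge0 q : 0 <= mq q.
Proof. by rewrite /mq mulr_ge0 // fv_ge0. Qed.

Lemma mmq : measurable_fun setT mq.
Proof.
apply: measurable_funM.
  exact: (measurableT_comp (@normr_measurable R setT) (@measurable_snd _ _ R R)).
exact: (measurableT_comp mfv (@measurable_fst _ _ R R)).
Qed.

Lemma kernel_int u (g : R -> R) : measurable_fun setT g -> (forall z, 0 <= g z) ->
  (\int[walk_kernel Pr (X 0) u]_z (g z)%:E = \int[mu0]_x (g (u + x))%:E)%E.
Proof.
move=> mg g0; rewrite /walk_kernel /mu0.
have mux : measurable_fun setT (fun om => u + X 0 om).
  by apply: measurable_funD => //; exact: measurable_cst.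
rewrite (ge0_integral_pushforward mux) //; last first.
  by move=> z _; rewrite lee_fin.
  exact/measurable_EFinP.
rewrite ge0_integral_distribution //.
  by apply/measurable_EFinP; apply: measurableT_comp => //; apply: measurable_funD => //; exact: measurable_cst.
by move=> z; rewrite lee_fin.
Qed.

Lemma step_ineq u a :
  (\int[mu0]_x (mq (Fst ((u, a), x)))%:E <= (mq (u, a))%:E)%E.
Proof.
rewrite /Fst /=; have [us|us] := boolP (u <= s); last first.
  have := integral_cst mu0 measurableT (mq (u, a))%:E.
  by rewrite /= probability_setT mule1 => ->.
have E x : mq (u + x, a * ratio u x) =
    `|a| * wf u `^ p * (v (u + x) * h (u + x)).
  have V0 : 0 < v (u + x) := vpos _.
  have key : v (u + x) `^ (- p) * v (u + x) `^ (2 + eps) = v (u + x).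
    rewrite -powRD; last by rewrite (gt_eqF V0) implybT.
    have -> : - p + (2 + eps) = 1 by ring.
    by rewrite powRr1 // ltW.
  rewrite /mq /fv /= ratioE normrM (@ger0_norm _ (_ * _)); last first.
    by rewrite mulr_ge0 // powR_ge0.
  by rewrite -[X in _ = _ * (X * _)]key; ring.
under eq_integral do rewrite E.
under eq_integral do rewrite EFinM.
rewrite ge0_integralZl_EFin //; last 3 first.
- by move=> x _; rewrite lee_fin mulr_ge0 // ltW // h_gt0.
- apply/measurable_EFinP; apply: measurable_funM.
    by apply: measurableT_comp => //; apply: measurable_funD => //; exact: measurable_cst.
  by apply: measurableT_comp => //; apply: measurable_funD => //; exact: measurable_cst.
- by rewrite mulr_ge0 // powR_ge0.
have -> : (\int[mu0]_x (v (u + x) * h (u + x))%:E =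
    \int[walk_kernel Pr (X 0) u]_z (v z * h z)%:E)%E.
  rewrite (@kernel_int u (fun z => v z * h z)) //.
    exact: measurable_funM.
  by move=> z; rewrite mulr_ge0 // ltW // h_gt0.
rewrite EFinM -muleA /mq /fv /= [X in (_ <= X)%E]EFinM.
apply: lee_wpmul2l; first by rewrite lee_fin.
by rewrite mulrC; exact: hyp.
Qed.

Lemma mmqE : measurable_fun setT (fun q => (mq q)%:E).
Proof. by apply/measurable_EFinP; exact: mmq. Qed.

Lemma super (y : R) n :
  (\int[Pr]_om (mq (Y X Fst (y, 1%R) n om))%:E <= (fv y)%:E)%E.
Proof.
elim: n => [|n IH].
  have := integral_cst Pr measurableT (mq (y, 1%R))%:E.
  by rewrite /= probability_setT mule1 => ->; rewrite /mq /= normr1 mul1r.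
have -> : (\int[Pr]_om (mq (Y X Fst (y, 1%R) n.+1 om))%:E =
    \int[Pr]_om ((fun z => (mq (Fst z))%:E) (Phi X Fst (y, 1%R) n om)))%E by [].
have mg : measurable_fun setT (fun z => (mq (Fst z))%:E).
  apply/measurable_EFinP; exact: (measurableT_comp mmq mFst).
have g0 : forall z, (0 <= (fun z => (mq (Fst z))%:E) z)%E.
  by move=> z; rewrite lee_fin mq_ge0.
rewrite (int_Phi mX indX idX mFst (y, 1%R) n mg g0).
rewrite (fubini_tonelli1 _ mg g0).
apply: le_trans IH.
rewrite -[X in (_ <= X)%E](@ge0_integral_distribution _ _ _ _ _ _
   (mkmf (mY mX mFst (y, 1%R) n)) (fun q => (mq q)%:E) mmqE); last first.
  by move=> q; rewrite lee_fin mq_ge0.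
apply: ge0_le_integral => //.
- by move=> q _; apply: integral_ge0 => x _; exact: g0.
- exact: measurable_fun_fubini_tonelli_F.
- exact: mmqE.
- by move=> [u a] _; rewrite /fubini_F; exact: step_ineq.
Qed.

Lemma walk0 y om : walk X y om 0 = y.
Proof. by rewrite /walk big_ord0 addr0. Qed.

Lemma walkS y om k : walk X y om k.+1 = walk X y om k + X k om.
Proof. by rewrite /walk big_ord_recr /= addrA. Qed.

Lemma Y_walk y om n : (forall k, (k < n)%N -> walk X y om k <= s) ->
  Y X Fst (y, 1%R) n om =
  (walk X y om n, \prod_(k < n) ratio (walk X y om k) (X k om)).
Proof.
elim: n => [|n IH] Hk; first by rewrite walk0 big_ord0.
rewrite /= IH; last by move=> k kn; apply: Hk; exact: ltnW.
by rewrite /Fst /= Hk // walkS big_ord_recr.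
Qed.

Lemma Y_stop y om n j : s < (Y X Fst (y, 1%R) n om).1 ->
  Y X Fst (y, 1%R) (n + j) om = Y X Fst (y, 1%R) n om.
Proof.
move=> H; elim: j => [|j IH]; first by rewrite addn0.
by rewrite addnS /= IH /Fst /= leNgt H.
Qed.

Definition kq (q : (R * R)%type) := if s < q.1 then `|q.2| else 0.

Lemma kq_ge0 q : 0 <= kq q.
Proof. by rewrite /kq; case: ifPn. Qed.

Definition C := delta1^-1 * delta2 `^ (- (2 + eps)).

Lemma C_ge0 : 0 <= C.
Proof. by rewrite /C mulr_ge0 ?powR_ge0 // invr_ge0 ltW. Qed.

Lemma kq_le q : kq q <= C * mq q.
Proof.
rewrite /kq; case: ifPn => sq; last by rewrite mulr_ge0 ?C_ge0 ?mq_ge0.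
have P0 : 0 < delta2 `^ (2 + eps) by apply: powR_gt0.
have fvge : delta2 `^ (2 + eps) * delta1 <= fv q.1.
  rewrite /fv ler_pM //; first exact: ltW.
  - exact: ltW.
  - apply: ge0_ler_powR; last exact: v_ge.
    + by rewrite addr_ge0 // ltW.
    + by rewrite nnegrE ltW.
    + by rewrite nnegrE ltW.
have -> : `|q.2| = C * (`|q.2| * (delta2 `^ (2 + eps) * delta1)).
  rewrite /C powRN; field.
  by rewrite (gt_eqF P0) (gt_eqF delta1_pos).
rewrite ler_wpM2l ?C_ge0 // /mq ler_wpM2l //.
Qed.

Lemma mkq : measurable_fun setT kq.
Proof.
rewrite /kq; apply: measurable_fun_ifT.
- apply: measurable_fun_ltr; first exact: measurable_cst.
  exact: measurable_fst.
- exact: (measurableT_comp (@normr_measurable R setT) (@measurable_snd _ _ R R)).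
- exact: measurable_cst.
Qed.

Lemma mkY y n : measurable_fun setT (fun om => (kq (Y X Fst (y, 1%R) n om))%:E).
Proof.
apply/measurable_EFinP; exact: (measurableT_comp mkq (mY mX mFst (y, 1%R) n)).
Qed.

Lemma int_k y n :
  (\int[Pr]_om (kq (Y X Fst (y, 1%R) n om))%:E <= (C * fv y)%:E)%E.
Proof.
apply: (@le_trans _ _ (\int[Pr]_om (C * mq (Y X Fst (y, 1%R) n om))%:E)%E).
  apply: ge0_le_integral => //.
  - by move=> om _; rewrite lee_fin kq_ge0.
  - exact: mkY.
  - apply/measurable_EFinP; apply: measurable_funM; first exact: measurable_cst.
    exact: (measurableT_comp mmq (mY mX mFst (y, 1%R) n)).
  - by move=> om _; rewrite lee_fin kq_le.
under eq_integral do rewrite EFinM.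
rewrite ge0_integralZl_EFin //; last 3 first.
- by move=> om _; rewrite lee_fin mq_ge0.
- apply/measurable_EFinP; exact: (measurableT_comp mmq (mY mX mFst (y, 1%R) n)).
- exact: C_ge0.
rewrite [X in (_ <= X)%E]EFinM; apply: lee_wpmul2l; first by rewrite lee_fin C_ge0.
exact: super.
Qed.

Lemma nd_k y om : nondecreasing_seq (fun n => (kq (Y X Fst (y, 1%R) n om))%:E).
Proof.
apply/nondecreasing_seqP => n; rewrite lee_fin.
have [H|H] := boolP (s < (Y X Fst (y, 1%R) n om).1).
  by have := Y_stop 1 H; rewrite addn1 => ->.
by rewrite {1}/kq (negbTE H) kq_ge0.
Qed.

Lemma prod_powR (I : Type) (r : seq I) (F : I -> R) (q : R) :
  (forall i, 0 <= F i) ->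
  (\prod_(i <- r) F i) `^ q = \prod_(i <- r) (F i `^ q).
Proof.
move=> F0; elim: r => [|i r IH]; first by rewrite !big_nil powR1.
rewrite !big_cons powRM ?IH //; exact: prodr_ge0.
Qed.

Lemma L_lim y om : ((Lwalk Pr X v s y om) `^ p)%:E =
  limn (fun n => (kq (Y X Fst (y, 1%R) n om))%:E).
Proof.
rewrite /Lwalk; case: pselect => [H|H].
  case: ex_minnP => tau Htau Hmin.
  have Hk : forall k, (k < tau)%N -> walk X y om k <= s.
    move=> k kt; rewrite leNgt; apply/negP => /Hmin.
    by rewrite leqNgt kt.
  have Yt := Y_walk Hk.
  have st : s < (Y X Fst (y, 1%R) tau om).1 by rewrite Yt.
  apply/esym/lim_near_cst => //.
  near=> n.
  have tn : (tau <= n)%N by near: n; exists tau.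
  rewrite -(subnKC tn) Y_stop // Yt /kq /= Htau ger0_norm; last first.
    by apply: prodr_ge0 => k _; exact: ratio_ge0.
  rewrite prod_powR; last first.
    by move=> k; rewrite divr_ge0 // ?wf_ge0 // ltW.
  by congr (_%:E); apply: eq_bigr => k _; rewrite /ratio walkS.
have Hk : forall k, walk X y om k <= s.
  by move=> k; rewrite leNgt; apply/negP => hk; apply: H; exists k.
rewrite powR0; last by rewrite gt_eqF // addr_gt0.
have -> : (fun n => (kq (Y X Fst (y, 1%R) n om))%:E) = fun=> 0%E.
  apply/funext => n; rewrite Y_walk; last by move=> k _; exact: Hk.
  by rewrite /kq /= ltNge Hk.
by rewrite lim_cst.
Unshelve. all: by end_near.
Qed.

Lemma main_result y : y <= s ->
  (\int[Pr]_om ((Lwalk Pr X v s y om) `^ (1 + eps))%R%:E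
    <= (delta1^-1 * delta2 `^ (- (2 + eps)) * v y `^ (2 + eps) * h y)%R%:E)%E.
Proof.
move=> ys.
have -> : delta1^-1 * delta2 `^ (- (2 + eps)) * v y `^ (2 + eps) * h y = C * fv y.
  by rewrite /C /fv !mulrA.
under eq_integral => om _ do rewrite L_lim.
rewrite (monotone_convergence Pr measurableT); last 3 first.
- by move=> n; exact: mkY.
- by move=> n om _; rewrite lee_fin kq_ge0.
- by move=> om _; exact: nd_k.
apply: lime_le.
  apply: ereal_nondecreasing_is_cvgn => m n mn.
  apply: ge0_le_integral => //.
  - by move=> om _; rewrite lee_fin kq_ge0.
  - exact: mkY.
  - exact: mkY.
  - by move=> om _; exact: nd_k.
by apply: nearW => n; exact: int_k.
Qed.

End main.

Theorem proposition2 (R : realType) (d : measure_display)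
  (Omega : measurableType d) (Pr : probability Omega R)
  (X : nat -> Omega -> R)
  (mX : forall k, measurable_fun [set: Omega] (X k))
  (indX : mutually_independent Pr X)
  (idX : identically_distributed Pr X)
  (s : R) (v : R -> R) (mv : measurable_fun [set: R] v)
  (vpos : forall z, 0 < v z)
  (eps : R) (eps_pos : 0 < eps)
  (wfin : forall y, y <= s ->
     (0 < walk_w Pr (X 0%N) v y)%E /\ (walk_w Pr (X 0%N) v y < +oo)%E)
  (delta1 : R) (delta1_pos : 0 < delta1)
  (h : R -> R) (mh : measurable_fun [set: R] h)
  (h_ge : forall z, delta1 <= h z)
  (hyp : forall y, y <= s ->
     ((fine (walk_w Pr (X 0%N) v y) `^ (1 + eps))%R%:E *
       \int[walk_kernel Pr (X 0%N) y]_z (v z * h z)%:E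
       <= (h y * v y `^ (2 + eps))%R%:E)%E)
  (h_ge1 : forall z, s < z -> 1 <= h z)
  (delta2 : R) (delta2_pos : 0 < delta2)
  (v_ge : forall z, s < z -> delta2 <= v z) :
  forall y, y <= s ->
    (\int[Pr]_om ((Lwalk Pr X v s y om) `^ (1 + eps))%R%:E
      <= (delta1^-1 * delta2 `^ (- (2 + eps)) * v y `^ (2 + eps) * h y)%R%:E)%E.
Proof.
move=> y ys; by apply: main_result.
Qed.
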